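(* There is an isomorphism of $\mathbb{Z}^n$-graded algebras $\mathrm{Cl}_q(n,k)\cong \mathrm{Cl}_q(1,k)^{\otimes n}$ (ordinary tensor product of $\mathbb{k}$-algebras).
   Context: Let $\mathbb{k}$ be a field of characteristic different from $2$, let $q\in\mathbb{k}^\times$, and let $N,k$ be positive integers. The quantum Clifford algebra $\mathrm{Cl}_q(N,k)$ is the unital associative $\mathbb{k}$-algebra generated by $\psi_a,\psi_a^*,\omega_a,\omega_a^{-1}$ for $a\in\{1,\dots,N\}$, subject to the relations (for all $a,b\in\{1,\dots,N\}$): $\omega_a\omega_b=\omega_b\omega_a$; $\omega_a\omega_a^{-1}=1$; $\omega_a\psi_b=q^{\delta_{ab}}\psi_b\omega_a$; $\omega_a\psi_b^*=q^{-\delta_{ab}}\psi_b^*\omega_a$; $\psi_a\psi_b+\psi_b\psi_a=0$; $\psi_a^*\psi_b^*+\psi_b^*\psi_a^*=0$; $\psi_a\psi_a^*+q^k\psi_a^*\psi_a=\omega_a^{-k}$; $\psi_a\psi_a^*+q^{-k}\psi_a^*\psi_a=\omega_a^{k}$; and $\psi_a\psi_b^*+\psi_b^*\psi_a=0$ if $a\neq b$. It carries a $\mathbb{Z}^N$-grading with $\deg\psi_a=e_a$, $\deg\psi_a^*=-e_a$, $\deg\omega_a=0$. The tensor power $\mathrm{Cl}_q(1,k)^{\otimes n}$ is $\mathbb{Z}^n$-graded by giving the $j$th factor degrees in $\mathbb{Z}e_j$. *)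

(* Defs.v *)
From HB Require Import structures.
From mathcomp Require Import all_boot all_order all_algebra.
Set Implicit Arguments. Unset Strict Implicit. Unset Printing Implicit Defensive.
Import Order.TTheory GRing.Theory Num.Theory.
Local Open Scope ring_scope.

Inductive clgen (N : nat) : Type :=
  | Psi of 'I_N | PsiS of 'I_N | Om of 'I_N | OmI of 'I_N.

Definition unitdeg (N : nat) (a : 'I_N) : {ffun 'I_N -> int} :=
  [ffun b => ((b == a) : nat)%:Z].

Definition cl_deg (N : nat) (g : clgen N) : {ffun 'I_N -> int} :=
  match g with
  | Psi a => unitdeg a
  | PsiS a => - unitdeg a
  | Om _ => 0
  | OmI _ => 0
  end.

Definition is_alg_hom (F : fieldType) (A B : algType F) (f : A -> B) : Prop :=
  [/\ forall x y, f (x + y) = f x + f y,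
      forall (c : F) x, f (c *: x) = c *: f x,
      f 1 = 1 &
      forall x y, f (x * y) = f x * f y].

Definition cl_rel (F : fieldType) (q : F) (N k : nat) (A : algType F)
    (g : clgen N -> A) : Prop :=
  let psi a := g (Psi a) in let psis a := g (PsiS a) in
  let om a := g (Om a) in let omi a := g (OmI a) in
  forall a b : 'I_N,
  om a * om b = om b * om a /\
  om a * omi a = 1 /\
  omi a * om a = 1 /\
  om a * psi b = (if a == b then q else 1) *: (psi b * om a) /\
  om a * psis b = (if a == b then q^-1 else 1) *: (psis b * om a) /\
  psi a * psi b + psi b * psi a = 0 /\
  psis a * psis b + psis b * psis a = 0 /\
  psi a * psis a + q ^+ k *: (psis a * psi a) = omi a ^+ k /\
  psi a * psis a + q ^- k *: (psis a * psi a) = om a ^+ k /\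
  (a != b -> psi a * psis b + psis b * psi a = 0).

(* (A, g) is the algebra presented by these generators and relations,
   i.e. (A, g) is Cl_q(N,k) (characterized by its universal property). *)
Definition is_Cl (F : fieldType) (q : F) (N k : nat) (A : algType F)
    (g : clgen N -> A) : Prop :=
  cl_rel q k g /\
  forall (D : algType F) (h : clgen N -> D), cl_rel q k h ->
    exists f : A -> D,
      [/\ is_alg_hom f, (forall x, f (g x) = h x) &
          forall f' : A -> D, is_alg_hom f' -> (forall x, f' (g x) = h x) ->
            forall y, f' y = f y].

(* (B, iota) is the n-fold (ordinary) tensor power C^{\otimes n} of the
   k-algebra C, iota j being the inclusion of the j-th tensor factor;
   characterized by the universal property of the tensor product of algebras. *)
Definition is_tensor_power (F : fieldType) (C B : algType F) (n : nat)
    (iota : 'I_n -> C -> B) : Prop :=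
  [/\ forall j, is_alg_hom (iota j),
      (forall (i j : 'I_n) x y, i != j -> iota i x * iota j y = iota j y * iota i x) &
      forall (D : algType F) (gg : 'I_n -> C -> D),
        (forall j, is_alg_hom (gg j)) ->
        (forall (i j : 'I_n) x y, i != j -> gg i x * gg j y = gg j y * gg i x) ->
        exists h : B -> D,
          [/\ is_alg_hom h, (forall j x, h (iota j x) = gg j x) &
              forall h' : B -> D, is_alg_hom h' ->
                (forall j x, h' (iota j x) = gg j x) -> forall y, h' y = h y]].

(* Homogeneous component of degree d of an algebra graded by declaring the
   generators gen l homogeneous of degree deg l: the span of the words in the
   generators of total degree d. *)
Definition hcomp (F : fieldType) (A : algType F) (L : Type) (N : nat)
    (gen : L -> A) (deg : L -> {ffun 'I_N -> int}) (d : {ffun 'I_N -> int})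
    (x : A) : Prop :=
  exists s : seq (F * seq L),
    all (fun p => \sum_(l <- p.2) deg l == d) s /\
    x = \sum_(p <- s) p.1 *: \prod_(l <- p.2) gen l.

(* Generators of the tensor power: iota j applied to the generators of the
   j-th factor Cl_q(1,k); the j-th factor is graded in Z e_j. *)
Definition tens_gen (F : fieldType) (C B : algType F) (n : nat)
    (gC : clgen 1 -> C) (iota : 'I_n -> C -> B) (l : 'I_n * clgen 1) : B :=
  iota l.1 (gC l.2).

Definition tens_deg (n : nat) (l : 'I_n * clgen 1) : {ffun 'I_n -> int} :=
  unitdeg l.1 *~ (cl_deg l.2 ord0).

Definition graded_alg_iso (F : fieldType) (A B : algType F) (LA LB : Type)
    (n : nat) (genA : LA -> A) (degA : LA -> {ffun 'I_n -> int})
    (genB : LB -> B) (degB : LB -> {ffun 'I_n -> int}) (f : A -> B) : Prop :=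
  [/\ is_alg_hom f, bijective f &
      forall d x, hcomp genA degA d x <-> hcomp genB degB d (f x)].

(* Main.v *)
Require Import Defs.
From Stdlib Require Import IndefiniteDescription.
From HB Require Import structures.
From mathcomp Require Import all_boot all_order all_algebra.
Import GRing.Theory.
Local Open Scope ring_scope.
Set Implicit Arguments. Unset Strict Implicit. Unset Printing Implicit Defensive.

Section Hom.
Variables (F : fieldType) (A B : algType F) (f : A -> B) (hf : is_alg_hom f).
Lemma homD x y : f (x + y) = f x + f y. Proof. by case: hf. Qed.
Lemma homZ c x : f (c *: x) = c *: f x. Proof. by case: hf. Qed.
Lemma hom1 : f 1 = 1. Proof. by case: hf. Qed.
Lemma homM x y : f (x * y) = f x * f y. Proof. by case: hf. Qed.
Lemma hom0 : f 0 = 0. Proof. by rewrite -(scale0r 0) homZ scale0r. Qed.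
Lemma homN x : f (- x) = - f x. Proof. by rewrite -scaleN1r homZ scaleN1r. Qed.
Lemma homB x y : f (x - y) = f x - f y. Proof. by rewrite homD homN. Qed.
Lemma homX x m : f (x ^+ m) = f x ^+ m.
Proof. by elim: m => [|m IH]; rewrite ?expr0 ?hom1 // !exprS homM IH. Qed.
Lemma hom_prod (I : Type) (r : seq I) (P : pred I) (G : I -> A) :
  f (\prod_(i <- r | P i) G i) = \prod_(i <- r | P i) f (G i).
Proof. exact: (big_morph f homM hom1). Qed.
Lemma hom_sum (I : Type) (r : seq I) (P : pred I) (G : I -> A) :
  f (\sum_(i <- r | P i) G i) = \sum_(i <- r | P i) f (G i).
Proof. exact: (big_morph f homD hom0). Qed.
End Hom.

Lemma id_hom (F : fieldType) (A : algType F) : is_alg_hom (@id A).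
Proof. by []. Qed.

Lemma comp_hom (F : fieldType) (A B D : algType F) (f : A -> B) (g : B -> D) :
  is_alg_hom f -> is_alg_hom g -> is_alg_hom (g \o f).
Proof.
move=> hf hg; split.
- by move=> x y /=; rewrite (homD hf) (homD hg).
- by move=> c x /=; rewrite (homZ hf) (homZ hg).
- by rewrite /= (hom1 hf) (hom1 hg).
- by move=> x y /=; rewrite (homM hf) (homM hg).
Qed.

Section Hcomp.
Variables (F : fieldType) (A : algType F) (L : Type) (N : nat)
  (gen : L -> A) (deg : L -> {ffun 'I_N -> int}).
Notation hc := (hcomp gen deg).

Lemma hc0 d : hc d 0.
Proof. by exists [::]; rewrite big_nil. Qed.
Lemma hc1 : hc 0 1.
Proof.
exists [:: (1, [::])]; split; first by rewrite /= big_nil eqxx.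
by rewrite big_cons big_nil big_nil scale1r addr0.
Qed.
Lemma hc_gen l : hc (deg l) (gen l).
Proof.
exists [:: (1, [:: l])]; split; first by rewrite /= big_cons big_nil addr0 eqxx.
by rewrite !big_cons !big_nil addr0 mulr1 scale1r.
Qed.
Lemma hcD d x y : hc d x -> hc d y -> hc d (x + y).
Proof.
move=> [s1 [h1 ->]] [s2 [h2 ->]]; exists (s1 ++ s2).
by rewrite all_cat h1 h2 big_cat.
Qed.
Lemma hcZ d c x : hc d x -> hc d (c *: x).
Proof.
move=> [s [h ->]]; exists [seq (c * p.1, p.2) | p <- s]; split.
  by rewrite all_map; apply: sub_all h => p.
rewrite big_map scaler_sumr; apply: eq_bigr => p _; by rewrite scalerA.
Qed.
Lemma hcN d x : hc d x -> hc d (- x).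
Proof. by move=> h; rewrite -scaleN1r; apply: hcZ. Qed.
Lemma hcB d x y : hc d x -> hc d y -> hc d (x - y).
Proof. by move=> hx hy; apply: hcD => //; apply: hcN. Qed.
Lemma hcM d1 d2 x y : hc d1 x -> hc d2 y -> hc (d1 + d2) (x * y).
Proof.
move=> [s1 [h1 ->]] [s2 [h2 ->]].
exists [seq (p1.1 * p2.1, p1.2 ++ p2.2) | p1 <- s1, p2 <- s2]; split.
  elim: s1 h1 => [|p1 s1 IH] //= /andP [/eqP hp1 h1].
  rewrite all_cat IH // andbT all_map; apply: sub_all h2 => p2 /eqP hp2 /=.
  by rewrite big_cat hp1 hp2.
rewrite big_allpairs_dep mulr_suml; apply: eq_bigr => p1 _.
rewrite mulr_sumr; apply: eq_bigr => p2 _.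
by rewrite /= big_cat /= -scalerAl -scalerAr scalerA.
Qed.
Lemma hc_prod (I : Type) (r : seq I) (P : pred I) (G : I -> A) :
  (forall i, P i -> hc 0 (G i)) -> hc 0 (\prod_(i <- r | P i) G i).
Proof.
move=> H; apply: (big_ind (hc 0)) => //; first exact: hc1.
by move=> x y hx hy; rewrite -(addr0 0); apply: hcM.
Qed.
Lemma hc_eq d d' x : d = d' -> hc d x -> hc d' x.
Proof. by move=> ->. Qed.
End Hcomp.

Lemma hc_hom (F : fieldType) (A B : algType F) (LA LB : Type) (N : nat)
  (genA : LA -> A) (degA : LA -> {ffun 'I_N -> int})
  (genB : LB -> B) (degB : LB -> {ffun 'I_N -> int}) (f : A -> B) :
  is_alg_hom f -> (forall l, hcomp genB degB (degA l) (f (genA l))) ->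
  forall d x, hcomp genA degA d x -> hcomp genB degB d (f x).
Proof.
move=> hf Hg d x [s [hs ->]]; rewrite (hom_sum hf).
elim: s hs => [|p s IH] /=; first by rewrite big_nil => _; apply: hc0.
move=> /andP [/eqP hp hs]; rewrite big_cons; apply: hcD; last exact: IH.
rewrite (homZ hf); apply: hcZ; rewrite (hom_prod hf) -hp.
elim: (p.2) => [|l r IHr]; first by rewrite !big_nil; apply: hc1.
by rewrite !big_cons; apply: hcM.
Qed.

Lemma cl_rel_hom (F : fieldType) (q : F) (N k : nat) (A D : algType F)
  (g : clgen N -> A) (f : A -> D) :
  is_alg_hom f -> cl_rel q k g -> cl_rel q k (f \o g).
Proof.
move=> hf H; rewrite /cl_rel; cbv zeta; move=> a b.
have [h1 [h2 [h3 [h4 [h5 [h6 [h7 [h8 [h9 h10]]]]]]]]] := H a b.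
rewrite /=; split; first by rewrite -!(homM hf) h1.
split; first by rewrite -(homM hf) h2 (hom1 hf).
split; first by rewrite -(homM hf) h3 (hom1 hf).
split; first by rewrite -!(homM hf) h4 (homZ hf) (homM hf).
split; first by rewrite -!(homM hf) h5 (homZ hf) (homM hf).
split; first by rewrite -!(homM hf) -(homD hf) h6 (hom0 hf).
split; first by rewrite -!(homM hf) -(homD hf) h7 (hom0 hf).
split; first by rewrite -!(homM hf) -(homZ hf) -(homD hf) h8 (homX hf).
split; first by rewrite -!(homM hf) -(homZ hf) -(homD hf) h9 (homX hf).
by move=> /h10 e; rewrite -!(homM hf) -(homD hf) e (hom0 hf).
Qed.

Lemma cl_unique (F : fieldType) (q : F) (N k : nat) (A D : algType F)
  (g : clgen N -> A) (HA : is_Cl q k g) (f1 f2 : A -> D) :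
  is_alg_hom f1 -> is_alg_hom f2 -> (forall l, f1 (g l) = f2 (g l)) ->
  forall x, f1 x = f2 x.
Proof.
move=> h1 h2 e x.
have [f [hf Hf U]] := HA.2 D (f2 \o g) (cl_rel_hom h2 HA.1).
by rewrite (U f1 h1 e) (U f2 h2 (fun _ => erefl)).
Qed.

Section DualDef.
Variables (F : fieldType) (A : algType F).
Definition dual : Type := (A * A)%type.
HB.instance Definition _ := GRing.Lmodule.copy dual (A * A)%type.
Definition dmul (x y : dual) : dual := (x.1 * y.1, x.1 * y.2 + x.2 * y.1).
Definition done : dual := (1, 0).
Lemma dmulA : associative dmul.
Proof.
move=> [a b] [c d] [e f]; rewrite /dmul /=; congr (_, _); first by rewrite mulrA.
by rewrite mulrDr mulrDl !mulrA addrA.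
Qed.
Lemma dmul1 : left_id done dmul.
Proof. by move=> [a b]; rewrite /dmul /= !mul1r mul0r addr0. Qed.
Lemma dmulr1 : right_id done dmul.
Proof. by move=> [a b]; rewrite /dmul /= !mulr1 mulr0 add0r. Qed.
Lemma dmulDl : left_distributive dmul +%R.
Proof.
move=> [a b] [c d] [e f]; rewrite /dmul /=; congr (_, _); first by rewrite mulrDl.
by rewrite !mulrDl addrACA.
Qed.
Lemma dmulDr : right_distributive dmul +%R.
Proof.
move=> [a b] [c d] [e f]; rewrite /dmul /=; congr (_, _); first by rewrite mulrDr.
by rewrite !mulrDr addrACA.
Qed.
Lemma done_neq0 : done != 0.
Proof. by apply/eqP => -[] /eqP; rewrite oner_eq0. Qed.
HB.instance Definition _ := GRing.Zmodule_isNzRing.Build dual dmulA dmul1 dmulr1 dmulDl dmulDr done_neq0.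
Lemma dscalerAl (c : F) (u v : dual) : c *: (u * v) = @GRing.mul dual (c *: u) v.
Proof.
case: u v => [a b] [e f].
apply/eqP; rewrite xpair_eqE /=.
by rewrite scalerDr -!scalerAl !eqxx.
Qed.
Lemma dscalerAr (c : F) (u v : dual) : c *: (u * v) = @GRing.mul dual u (c *: v).
Proof.
case: u v => [a b] [e f].
apply/eqP; rewrite xpair_eqE /=.
by rewrite scalerDr -!scalerAr !eqxx.
Qed.
HB.instance Definition _ := GRing.Lmodule_isLalgebra.Build F dual dscalerAl.
HB.instance Definition _ := GRing.Lalgebra_isAlgebra.Build F dual dscalerAr.
Lemma dual_mulE (a b e f : A) : ((a, b) : dual) * ((e, f) : dual) = ((a * e, a * f + b * e) : dual).
Proof. by []. Qed.
Lemma dual_addE (a b e f : A) : ((a, b) : dual) + ((e, f) : dual) = ((a + e, b + f) : dual).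
Proof. by []. Qed.
Lemma dual_scaleE (c : F) (a b : A) : c *: ((a, b) : dual) = ((c *: a, c *: b) : dual).
Proof. by []. Qed.
Lemma dual_oneE : (1 : dual) = ((1, 0) : dual).
Proof. by []. Qed.
End DualDef.

Lemma derive_comm (F : fieldType) (q : F) (N k : nat) (C A : algType F)
  (gC : clgen N -> C) (HC : is_Cl q k gC) (G : C -> A) (hG : is_alg_hom G)
  (z : A) : (forall l, G (gC l) * z = z * G (gC l)) ->
  forall x, G x * z = z * G x.
Proof.
move=> Hz x.
pose phi := fun x : C => ((G x, 0) : dual A).
pose psi := fun x : C => ((G x, G x * z - z * G x) : dual A).
have hphi : is_alg_hom phi.
  split.
  - by move=> u v; rewrite /phi dual_addE (homD hG) addr0.
  - by move=> c u; rewrite /phi dual_scaleE (homZ hG) scaler0.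
  - by rewrite /phi (hom1 hG).
  - by move=> u v; rewrite /phi dual_mulE (homM hG) mulr0 mul0r addr0.
have hpsi : is_alg_hom psi.
  split.
  - move=> u v; rewrite /psi dual_addE (homD hG); congr (_, _).
    by rewrite mulrDl mulrDr opprD addrACA.
  - move=> c u; rewrite /psi dual_scaleE (homZ hG); congr (_, _).
    by rewrite scalerBr -scalerAl -scalerAr.
  - by rewrite /psi (hom1 hG) mul1r mulr1 subrr.
  - move=> u v; rewrite /psi dual_mulE (homM hG); congr (_, _).
    rewrite mulrBr mulrBl !mulrA addrA; congr (_ - _).
    by rewrite subrK.
have := cl_unique HC hpsi hphi.
have E : forall l, psi (gC l) = phi (gC l).
  by move=> l; rewrite /psi /phi (Hz l) subrr.
move=> /(_ E x); rewrite /psi /phi => -[] /eqP; rewrite subr_eq0 => /eqP.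
by [].
Qed.

Section Parity.
Variables (F : fieldType) (q : F) (N k : nat) (A : algType F) (g : clgen N -> A).
Hypothesis (hrel : cl_rel q k g) (h2 : (2%:R : F) != 0) (hq : q != 0).
Local Notation psi a := (g (Psi a)).
Local Notation psis a := (g (PsiS a)).
Local Notation om a := (g (Om a)).
Local Notation omi a := (g (OmI a)).

Lemma r_omom a b : om a * om b = om b * om a. Proof. by have [] := hrel a b. Qed.
Lemma r_omomi a : om a * omi a = 1. Proof. by have [_ []] := hrel a a. Qed.
Lemma r_omiom a : omi a * om a = 1. Proof. by have [_ [_ []]] := hrel a a. Qed.
Lemma r_ompsi a b : om a * psi b = (if a == b then q else 1) *: (psi b * om a).
Proof. by have [_ [_ [_ []]]] := hrel a b. Qed.
Lemma r_ompsis a b : om a * psis b = (if a == b then q^-1 else 1) *: (psis b * om a).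
Proof. by have [_ [_ [_ [_ []]]]] := hrel a b. Qed.
Lemma r_pp a b : psi a * psi b + psi b * psi a = 0.
Proof. by have [_ [_ [_ [_ [_ []]]]]] := hrel a b. Qed.
Lemma r_ss a b : psis a * psis b + psis b * psis a = 0.
Proof. by have [_ [_ [_ [_ [_ [_ []]]]]]] := hrel a b. Qed.
Lemma r_1 a : psi a * psis a + q ^+ k *: (psis a * psi a) = omi a ^+ k.
Proof. by have [_ [_ [_ [_ [_ [_ [_ []]]]]]]] := hrel a a. Qed.
Lemma r_2 a : psi a * psis a + q ^- k *: (psis a * psi a) = om a ^+ k.
Proof. by have [_ [_ [_ [_ [_ [_ [_ [_ []]]]]]]]] := hrel a a. Qed.
Lemma r_ps a b : a != b -> psi a * psis b + psis b * psi a = 0.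
Proof. by have [_ [_ [_ [_ [_ [_ [_ [_ [_ ]]]]]]]]] := hrel a b. Qed.

Lemma anti_of (x y : A) : x * y + y * x = 0 -> y * x = - (x * y).
Proof. by move/eqP; rewrite addrC addr_eq0 => /eqP. Qed.

Lemma sq0 (x : A) : x * x + x * x = 0 -> x * x = 0.
Proof.
move=> e; have : (2%:R : F) *: (x * x) = 0 by rewrite scaler_nat mulr2n.
by move/eqP; rewrite scaler_eq0 (negbTE h2) /= => /eqP.
Qed.

Lemma psi2 a : psi a * psi a = 0. Proof. exact/sq0/r_pp. Qed.
Lemma psis2 a : psis a * psis a = 0. Proof. exact/sq0/r_ss. Qed.

Definition Kp a := psi a * psis a - psis a * psi a.

Lemma K_psi a : Kp a * psi a = - (psi a * Kp a).
Proof.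
rewrite /Kp mulrBl mulrBr -!mulrA psi2 mulr0 subr0 !mulrA psi2 mul0r sub0r.
by rewrite opprK.
Qed.
Lemma K_psis a : Kp a * psis a = - (psis a * Kp a).
Proof.
rewrite /Kp mulrBl mulrBr -!mulrA psis2 mulr0 sub0r !mulrA psis2 mul0r subr0.
by [].
Qed.

Lemma omiXomX a : omi a ^+ k * om a ^+ k = 1.
Proof.
rewrite -exprMn_comm ?r_omiom ?expr1n //.
by rewrite /GRing.comm r_omiom r_omomi.
Qed.

Lemma K2 a : Kp a * Kp a = 1.
Proof.
have e1 : psi a * psis a * psi a = omi a ^+ k * psi a.
  by rewrite -r_1 mulrDl -scalerAl -[(psis a * psi a) * psi a]mulrA psi2 mulr0 scaler0 addr0.
have e2 : psis a * psi a * psis a = q ^- k *: (omi a ^+ k * psis a).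
  rewrite -r_1 mulrDl -[psi a * psis a * psis a]mulrA psis2 mulr0 add0r -!scalerAl scalerA.
  by rewrite mulVf ?scale1r // expf_neq0.
have MN : (psi a * psis a) * (psis a * psi a) = 0.
  by rewrite mulrA -(mulrA (psi a)) psis2 mulr0 mul0r.
have NM : (psis a * psi a) * (psi a * psis a) = 0.
  by rewrite mulrA -(mulrA (psis a)) psi2 mulr0 mul0r.
have MM : (psi a * psis a) * (psi a * psis a) = omi a ^+ k * (psi a * psis a).
  by rewrite mulrA e1 -mulrA.
have NN : (psis a * psi a) * (psis a * psi a) = q ^- k *: (omi a ^+ k * (psis a * psi a)).
  by rewrite mulrA e2 -scalerAl mulrA.
rewrite /Kp mulrBl !mulrBr MN NM MM NN subr0 sub0r opprK.
by rewrite scalerAr -mulrDr r_2 omiXomX.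
Qed.

Lemma anti2 (z x y : A) : z * x = - (x * z) -> z * y = - (y * z) ->
  GRing.comm z (x * y).
Proof. by move=> ex ey; rewrite /GRing.comm mulrA ex mulNr -[x * z * y]mulrA ey mulrN opprK mulrA. Qed.

Lemma scal2 (z x y : A) (c c' : F) : c * c' = 1 ->
  z * x = c *: (x * z) -> z * y = c' *: (y * z) -> GRing.comm z (x * y).
Proof.
move=> cc ex ey; rewrite /GRing.comm mulrA ex -scalerAl -[x * z * y]mulrA ey.
by rewrite -scalerAr scalerA cc scale1r mulrA.
Qed.

Lemma comm_inv (z x x' : A) : GRing.comm z x -> x * x' = 1 -> x' * x = 1 ->
  GRing.comm z x'.
Proof.
move=> e e1 e2; rewrite /GRing.comm.
by rewrite -[z * x']mul1r -e2 -mulrA (mulrA x z) -e -(mulrA z) e1 mulr1.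
Qed.

Lemma K_om a b : GRing.comm (om b) (Kp a).
Proof.
have cc : (if b == a then q else 1) * (if b == a then q^-1 else 1) = 1.
  by case: (b == a); rewrite ?mulfV ?mulr1.
have cc' : (if b == a then q^-1 else 1) * (if b == a then q else 1) = 1.
  by rewrite mulrC.
apply: commrB; [exact: (scal2 cc (r_ompsi b a) (r_ompsis b a))
               |exact: (scal2 cc' (r_ompsis b a) (r_ompsi b a))].
Qed.

Lemma K_omi a b : GRing.comm (omi b) (Kp a).
Proof.
apply: commr_sym; apply: (comm_inv (x := om b)); [exact/commr_sym/K_om|exact: r_omomi|exact: r_omiom].
Qed.

Ltac sa := apply: anti_of; first [ by rewrite r_pp | by rewrite addrC r_pp
  | by rewrite r_ss | by rewrite addrC r_ss | by rewrite r_ps | by rewrite addrC r_ps ].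

Lemma K_psi_ne a b : a != b -> GRing.comm (psi b) (Kp a).
Proof.
move=> ne; have ne' : b != a by rewrite eq_sym.
by apply: commrB; apply: anti2; sa.
Qed.

Lemma K_psis_ne a b : a != b -> GRing.comm (psis b) (Kp a).
Proof.
move=> ne; have ne' : b != a by rewrite eq_sym.
by apply: commrB; apply: anti2; sa.
Qed.

Lemma K_K a b : GRing.comm (Kp a) (Kp b).
Proof.
have [->|ne] := eqVneq a b; first exact: commr_refl.
have ne' : b != a by rewrite eq_sym.
rewrite [Kp a]/Kp; apply: commr_sym; apply: commrB; apply: commrM;
  apply: commr_sym; by [apply: K_psi_ne | apply: K_psis_ne].
Qed.
End Parity.

Lemma prod_sign (R : pzRingType) (I : eqType) (r : seq I) (P : pred I)
  (G : I -> R) (x : R) (a : I) :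
  (forall j, j != a -> G j * x = x * G j) -> G a * x = - (x * G a) ->
  (\prod_(j <- r | P j) G j) * x =
  (-1) ^+ (count (fun j => P j && (j == a)) r) * (x * \prod_(j <- r | P j) G j).
Proof.
move=> Hc Ha; elim: r => [|j r IH]; first by rewrite big_nil /= expr0 mul1r mulr1 mul1r.
rewrite big_cons /=; case: (P j) => /=; last by rewrite add0n.
rewrite -mulrA IH (mulrA (G j)) commr_sign -!mulrA (mulrA (G j)).
have [ja|jna] := eqVneq j a.
  rewrite ja Ha /= exprS mulN1r mulNr mulNr mulrN; congr (- (_ * _)).
  by rewrite mulrA.
by rewrite (Hc _ jna) /= -mulrA.
Qed.

Lemma prod_sq (R : pzRingType) (I : Type) (r : seq I) (P : pred I) (G : I -> R) :
  (forall i j, G i * G j = G j * G i) -> (forall j, G j * G j = 1) ->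
  (\prod_(j <- r | P j) G j) * (\prod_(j <- r | P j) G j) = 1.
Proof.
move=> Hc H1; elim: r => [|j r IH]; first by rewrite big_nil mulr1.
rewrite big_cons; case: (P j) => //.
have cm : GRing.comm (G j) (\prod_(j <- r | P j) G j).
  by apply: commr_prod => i _; apply: Hc.
by rewrite -mulrA (mulrA _ (G j)) -cm -mulrA IH mulr1 H1.
Qed.

Lemma count_one (I : eqType) (r : seq I) (P : pred I) (a : I) :
  uniq r -> a \in r -> count (fun j => P j && (j == a)) r = P a.
Proof.
move=> ur ar.
rewrite (eq_count (a2 := fun j => P a && (j == a))); last first.
  by move=> j /=; case: eqP => [->|_]; rewrite ?andbF.
case: (P a) => /=; last by rewrite count_pred0.
by have := count_uniq_mem a ur; rewrite ar.
Qed.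

Lemma count_ord (n : nat) (a b : 'I_n) :
  count (fun j : 'I_n => (j < a)%N && (j == b)) (index_enum 'I_n) = (b < a)%N.
Proof.
by rewrite (@count_one _ _ (fun j : 'I_n => (j < a)%N)) ?index_enum_uniq ?mem_index_enum.
Qed.

Section BSide.
Variables (F : fieldType) (q : F) (n k : nat).
Hypotheses (h2 : (2%:R : F) != 0) (hq : q != 0).
Variables (C : algType F) (gC : clgen 1 -> C) (HC : cl_rel q k gC).
Variables (B : algType F) (iota : 'I_n -> C -> B).
Hypothesis (Hhom : forall j, is_alg_hom (iota j))
  (Hcomm : forall (i j : 'I_n) x y, i != j -> iota i x * iota j y = iota j y * iota i x).

Local Notation pC := (gC (Psi ord0)).
Local Notation sC := (gC (PsiS ord0)).
Local Notation wC := (gC (Om ord0)).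
Local Notation wiC := (gC (OmI ord0)).
Local Notation Kc := (Kp gC ord0).

Definition PB (a : 'I_n) : B := \prod_(j < n | (j < a)%N) iota j Kc.

Definition hB (l : clgen n) : B :=
  match l with
  | Psi a => PB a * iota a pC
  | PsiS a => PB a * iota a sC
  | Om a => iota a wC
  | OmI a => iota a wiC
  end.

Lemma PB_comm a b (x : C) : Kc * x = x * Kc -> PB a * iota b x = iota b x * PB a.
Proof.
move=> e; rewrite /PB; symmetry; apply: commr_prod => j _.
have [->|ne] := eqVneq j b; first by rewrite /GRing.comm -!(homM (Hhom b)) e.
by rewrite /GRing.comm Hcomm // eq_sym.
Qed.

Lemma PB_anti a b (x : C) : Kc * x = - (x * Kc) ->
  PB a * iota b x = (-1) ^+ (b < a)%N * (iota b x * PB a).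
Proof.
move=> e; rewrite /PB.
rewrite (@prod_sign B _ (index_enum 'I_n) (fun j : 'I_n => (j < a)%N) (fun j => iota j Kc) (iota b x) b) ?count_ord //.
- by move=> j ne; rewrite Hcomm.
- by rewrite -!(homM (Hhom b)) e (homN (Hhom b)).
Qed.

Lemma PB2 a : PB a * PB a = 1.
Proof.
apply: prod_sq => [i j|j]; last by rewrite -(homM (Hhom j)) (K2 HC h2 hq) (hom1 (Hhom j)).
have [->|ne] := eqVneq i j; first by [].
exact: Hcomm.
Qed.

Lemma PB_PB a b : PB a * PB b = PB b * PB a.
Proof.
rewrite {2}/PB; symmetry; apply: commr_prod => j _.
by rewrite /GRing.comm PB_comm // K_K.
Qed.

Lemma PB_sq a (x y : C) : Kc * x = - (x * Kc) ->
  (PB a * iota a x) * (PB a * iota a y) = iota a (x * y).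
Proof.
move=> e; have ea := PB_anti a a e; rewrite ltnn expr0 mul1r in ea.
by rewrite -mulrA (mulrA (iota a x)) -ea !mulrA PB2 mul1r (homM (Hhom a)).
Qed.

Lemma PB_anti' a b (x : C) : Kc * x = - (x * Kc) ->
  iota b x * PB a = (if (b < a)%N then - (PB a * iota b x) else PB a * iota b x).
Proof.
move=> e; rewrite (PB_anti a b e); case: (b < a)%N; rewrite ?expr0 ?expr1 ?mul1r //.
by rewrite mulN1r opprK.
Qed.

Lemma hB_anti a b (x y : C) : Kc * x = - (x * Kc) -> Kc * y = - (y * Kc) ->
  (a = b -> x * y + y * x = 0) ->
  (PB a * iota a x) * (PB b * iota b y) + (PB b * iota b y) * (PB a * iota a x) = 0.
Proof.
move=> ex ey exy.
have E1 : PB a * iota a x * (PB b * iota b y) = PB a * (iota a x * PB b) * iota b y.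
  by rewrite !mulrA.
have E2 : PB b * iota b y * (PB a * iota a x) = PB b * (iota b y * PB a) * iota a x.
  by rewrite !mulrA.
rewrite E1 E2 !(PB_anti' _ _ ex) !(PB_anti' _ _ ey).
case: (ltngtP a b) => [ab|ba|eab].
- rewrite mulrN mulNr !mulrA (PB_PB b a) -!mulrA Hcomm.
    by rewrite addNr.
  by apply/eqP => eab; rewrite eab ltnn in ab.
- rewrite mulrN mulNr !mulrA (PB_PB b a) -!mulrA Hcomm.
    by rewrite addrN.
  by apply/eqP => eab; rewrite eab ltnn in ba.
- have eab' : a = b by apply: val_inj.
  subst b; rewrite !mulrA PB2 !mul1r -!(homM (Hhom a)) -(homD (Hhom a)).
  by rewrite exy // (hom0 (Hhom a)).
Qed.

Lemma hB_rel : cl_rel q k hB.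
Proof.
have Kw : Kc * wC = wC * Kc by have := K_om HC hq ord0 ord0.
have Kwi : Kc * wiC = wiC * Kc by have := K_omi HC hq ord0 ord0.
have Kp_ : Kc * pC = - (pC * Kc) by exact: K_psi HC h2 ord0.
have Ks_ : Kc * sC = - (sC * Kc) by exact: K_psis HC h2 ord0.
rewrite /cl_rel; cbv zeta; move=> a b /=.
have ih := Hhom a; have ihb := Hhom b.
split.
  have [->|ne] := eqVneq a b; first by []. exact: Hcomm.
split; first by rewrite -(homM ih) (r_omomi HC) (hom1 ih).
split; first by rewrite -(homM ih) (r_omiom HC) (hom1 ih).
split.
  rewrite mulrA -(PB_comm b a Kw) -mulrA; have [<-|ne] := eqVneq a b.
    by rewrite -(homM ih) (r_ompsi HC) eqxx (homZ ih) (homM ih) -scalerAr mulrA.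
  by rewrite scale1r Hcomm // mulrA.
split.
  rewrite mulrA -(PB_comm b a Kw) -mulrA; have [<-|ne] := eqVneq a b.
    by rewrite -(homM ih) (r_ompsis HC) eqxx (homZ ih) (homM ih) -scalerAr mulrA.
  by rewrite scale1r Hcomm // mulrA.
split; first by apply: hB_anti => // _; rewrite (r_pp HC).
split; first by apply: hB_anti => // _; rewrite (r_ss HC).
split.
  rewrite !PB_sq // -(homZ ih) -(homD ih) (r_1 HC) (homX ih) //.
split.
  rewrite !PB_sq // -(homZ ih) -(homD ih) (r_2 HC) (homX ih) //.
move=> ne; apply: hB_anti => // eab; by rewrite eab eqxx in ne.
Qed.
End BSide.

Section ASide.
Variables (F : fieldType) (q : F) (n k : nat).
Hypotheses (h2 : (2%:R : F) != 0) (hq : q != 0).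
Variables (A : algType F) (g : clgen n -> A) (HA : cl_rel q k g).
Local Notation psi a := (g (Psi a)).
Local Notation psis a := (g (PsiS a)).
Local Notation om a := (g (Om a)).
Local Notation omi a := (g (OmI a)).

Definition QA (a : 'I_n) : A := \prod_(j < n | (j < a)%N) Kp g j.

Definition hA (j : 'I_n) (l : clgen 1) : A :=
  match l with
  | Psi _ => QA j * psi j
  | PsiS _ => QA j * psis j
  | Om _ => om j
  | OmI _ => omi j
  end.

Lemma QA_om a b : QA a * om b = om b * QA a.
Proof. by symmetry; apply: commr_prod => j _; apply: K_om. Qed.
Lemma QA_omi a b : QA a * omi b = omi b * QA a.
Proof. by symmetry; apply: commr_prod => j _; apply: K_omi. Qed.

Lemma QA_sgn a b (X : A) : (forall j, j != b -> Kp g j * X = X * Kp g j) ->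
  Kp g b * X = - (X * Kp g b) ->
  X * QA a = (if (b < a)%N then - (QA a * X) else QA a * X).
Proof.
move=> H1 H2; rewrite /QA.
rewrite (@prod_sign A _ (index_enum 'I_n) (fun j : 'I_n => (j < a)%N) (fun j => Kp g j) X b) ?count_ord //.
by case: (b < a)%N; rewrite ?expr0 ?expr1 ?mul1r // mulN1r opprK.
Qed.

Lemma QA_psi a b : psi b * QA a = (if (b < a)%N then - (QA a * psi b) else QA a * psi b).
Proof.
apply: QA_sgn; last exact: (K_psi HA h2).
by move=> j ne; symmetry; apply: (K_psi_ne HA).
Qed.
Lemma QA_psis a b : psis b * QA a = (if (b < a)%N then - (QA a * psis b) else QA a * psis b).
Proof.
apply: QA_sgn; last exact: (K_psis HA h2).
by move=> j ne; symmetry; apply: (K_psis_ne HA).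
Qed.

Lemma QA2 a : QA a * QA a = 1.
Proof. apply: prod_sq => [i j|j]; [exact: K_K | exact: K2]. Qed.

Lemma QA_QA a b : QA a * QA b = QA b * QA a.
Proof.
rewrite {2}/QA; symmetry; apply: commr_prod => j _.
apply: commr_sym; rewrite /GRing.comm; apply: commr_prod => i _; exact: K_K.
Qed.

Lemma QA_sq a (X Y : A) : X * QA a = QA a * X -> (QA a * X) * (QA a * Y) = X * Y.
Proof. by move=> e; rewrite -mulrA (mulrA X) e !mulrA QA2 mul1r. Qed.

Lemma QA_psi_a a : psi a * QA a = QA a * psi a.
Proof. by rewrite QA_psi ltnn. Qed.
Lemma QA_psis_a a : psis a * QA a = QA a * psis a.
Proof. by rewrite QA_psis ltnn. Qed.

Lemma hA_rel j : cl_rel q k (hA j).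
Proof.
rewrite /cl_rel; cbv zeta; move=> a b; rewrite (ord1 a) (ord1 b) /=.
split; first by [].
split; first exact: (r_omomi HA).
split; first exact: (r_omiom HA).
split; first by rewrite mulrA -QA_om -mulrA (r_ompsi HA) eqxx -scalerAr mulrA.
split; first by rewrite mulrA -QA_om -mulrA (r_ompsis HA) eqxx -scalerAr mulrA.
split; first by rewrite QA_sq ?QA_psi_a // (r_pp HA).
split; first by rewrite QA_sq ?QA_psis_a // (r_ss HA).
split; first by rewrite !QA_sq ?QA_psi_a ?QA_psis_a // (r_1 HA).
split; first by rewrite !QA_sq ?QA_psi_a ?QA_psis_a // (r_2 HA).
by [].
Qed.

Lemma even_comm i j l' : i != j -> om i * hA j l' = hA j l' * om i.
Proof.
move=> ne; case: l' => x /=.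
- by rewrite mulrA -QA_om -!mulrA (r_ompsi HA) (negbTE ne) scale1r.
- by rewrite mulrA -QA_om -!mulrA (r_ompsis HA) (negbTE ne) scale1r.
- exact: (r_omom HA).
- apply: (comm_inv (x := om j)); [exact: (r_omom HA)|exact: (r_omomi HA)|exact: (r_omiom HA)].
Qed.

Lemma evenI_comm i j l' : i != j -> omi i * hA j l' = hA j l' * omi i.
Proof.
move=> ne; symmetry; apply: (comm_inv (x := om i)); last exact: (r_omiom HA).
  by rewrite /GRing.comm even_comm.
exact: (r_omomi HA).
Qed.

Lemma odd_cross i j (X Y : A) : i != j ->
  X * QA j = (if (i < j)%N then - (QA j * X) else QA j * X) ->
  Y * QA i = (if (j < i)%N then - (QA i * Y) else QA i * Y) ->
  Y * X = - (X * Y) ->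
  (QA i * X) * (QA j * Y) = (QA j * Y) * (QA i * X).
Proof.
move=> ne hX hY hXY.
have E1 : QA i * X * (QA j * Y) = QA i * (X * QA j) * Y by rewrite !mulrA.
have E2 : QA j * Y * (QA i * X) = QA j * (Y * QA i) * X by rewrite !mulrA.
rewrite E1 E2 hX hY; case: (ltngtP i j) => [ij|ji|eij].
- by rewrite mulrN mulNr !mulrA (QA_QA j i) -!mulrA hXY !mulrN.
- by rewrite mulrN mulNr !mulrA (QA_QA j i) -!mulrA hXY !mulrN opprK.
- by move: ne; rewrite (val_inj eij) eqxx.
Qed.

Ltac sa2 := apply: anti_of; first [ by rewrite (r_pp HA) | by rewrite addrC (r_pp HA)
  | by rewrite (r_ss HA) | by rewrite addrC (r_ss HA) | by rewrite (r_ps HA)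
  | by rewrite addrC (r_ps HA) ].

Lemma hA_cross i j l l' : i != j -> hA i l * hA j l' = hA j l' * hA i l.
Proof.
move=> ne; have ne' : j != i by rewrite eq_sym.
case: l => x.
- case: l' => y.
  + by apply: odd_cross => //; [exact: QA_psi|exact: QA_psi|sa2].
  + by apply: odd_cross => //; [exact: QA_psi|exact: QA_psis|sa2].
  + exact: (esym (even_comm _ ne')).
  + exact: (esym (evenI_comm _ ne')).
- case: l' => y.
  + by apply: odd_cross => //; [exact: QA_psis|exact: QA_psi|sa2].
  + by apply: odd_cross => //; [exact: QA_psis|exact: QA_psis|sa2].
  + exact: (esym (even_comm _ ne')).
  + exact: (esym (evenI_comm _ ne')).
- exact: (even_comm _ ne).
- exact: (evenI_comm _ ne).
Qed.
End ASide.

Lemma td_psi n (j : 'I_n) x : tens_deg (j, Psi x) = unitdeg j.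
Proof. by rewrite /tens_deg /= /unitdeg ffunE (ord1 x) eqxx mulr1z. Qed.
Lemma td_psis n (j : 'I_n) x : tens_deg (j, PsiS x) = - unitdeg j.
Proof. by rewrite /tens_deg /= /unitdeg !ffunE (ord1 x) eqxx mulrN1z. Qed.
Lemma td_om n (j : 'I_n) x : tens_deg (j, Om x) = 0.
Proof. by rewrite /tens_deg /= ffunE mulr0z. Qed.
Lemma td_omi n (j : 'I_n) x : tens_deg (j, OmI x) = 0.
Proof. by rewrite /tens_deg /= ffunE mulr0z. Qed.

Lemma hcK (F : fieldType) (A : algType F) (L : Type) (N : nat)
  (gen : L -> A) (deg : L -> {ffun 'I_N -> int}) (lp ls : L) :
  deg lp + deg ls = 0 ->
  hcomp gen deg 0 (gen lp * gen ls - gen ls * gen lp).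
Proof.
move=> e; apply: hcB; apply: (hc_eq _ (hcM (hc_gen _ _ _) (hc_gen _ _ _))) => //.
by rewrite addrC.
Qed.

Unset Implicit Arguments.

Theorem corollary3p11 (F : fieldType) (hF : 2%N \notin [pchar F])
  (q : F) (hq : q != 0) (n k : nat) (hn : (0 < n)%N) (hk : (0 < k)%N)
  (A : algType F) (g : clgen n -> A) (HA : is_Cl q k g)
  (C : algType F) (gC : clgen 1 -> C) (HC : is_Cl q k gC)
  (B : algType F) (iota : 'I_n -> C -> B) (HB : is_tensor_power iota) :
  exists f : A -> B,
    graded_alg_iso g (@cl_deg n) (tens_gen gC iota) (@tens_deg n) f.
Proof.
have h2 : (2%:R : F) != 0.
  by apply: contra hF => e; rewrite inE /= e.
have [HArel HAuniv] := HA.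
have [HCrel HCuniv] := HC.
have [Hhom Hcomm Huniv] := HB.
have [f [hf fg _]] := HAuniv B (hB gC iota) (hB_rel h2 hq HCrel Hhom Hcomm).
have ggex : forall j, {G : C -> A | is_alg_hom G /\ forall l, G (gC l) = hA g j l}.
  move=> j; apply: constructive_indefinite_description.
  have [G [hG HG _]] := HCuniv A (hA g j) (hA_rel h2 hq HArel j).
  by exists G.
pose gg j := sval (ggex j).
have hgg : forall j, is_alg_hom (gg j) by move=> j; exact: (proj2_sig (ggex j)).1.
have ggE : forall j l, gg j (gC l) = hA g j l by move=> j; exact: (proj2_sig (ggex j)).2.
have ggc : forall (i j : 'I_n) x y, i != j -> gg i x * gg j y = gg j y * gg i x.
  move=> i j x y ne.
  have s1 : forall x' l', gg i x' * gg j (gC l') = gg j (gC l') * gg i x'.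
    move=> x' l'; apply: (derive_comm HC (hgg i)) => l; rewrite !ggE.
    exact: (hA_cross h2 hq HArel).
  symmetry; apply: (derive_comm HC (hgg j)) => l'; symmetry; exact: s1.
have [f' [hf' f'iota _]] := Huniv A gg hgg ggc.
have KcC : Kp gC ord0 * gC (Psi ord0) = - (gC (Psi ord0) * Kp gC ord0).
  exact: (K_psi HCrel h2).
have KcS : Kp gC ord0 * gC (PsiS ord0) = - (gC (PsiS ord0) * Kp gC ord0).
  exact: (K_psis HCrel h2).
have f'K : forall j, f' (iota j (Kp gC ord0)) = Kp g j.
  move=> j; rewrite f'iota /Kp (homB (hgg j)) !(homM (hgg j)) !ggE /=.
  rewrite !(QA_sq h2 hq HArel) //; [exact: (QA_psis_a h2 HArel)|exact: (QA_psi_a h2 HArel)].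
have f'P : forall a, f' (PB gC iota a) = QA g a.
  by move=> a; rewrite /PB (hom_prod hf'); apply: eq_bigr => j _; rewrite f'K.
have fK : forall j, f (Kp g j) = iota j (Kp gC ord0).
  move=> j; rewrite /Kp (homB hf) !(homM hf) !fg /=.
  rewrite !(PB_sq h2 hq HCrel Hhom Hcomm) // (homB (Hhom j)) //.
have fQ : forall a, f (QA g a) = PB gC iota a.
  by move=> a; rewrite /QA (hom_prod hf); apply: eq_bigr => j _; rewrite fK.
have ff' : forall x, f' (f x) = x.
  apply: (cl_unique HA (comp_hom hf hf') (id_hom A)) => l /=.
  rewrite fg; case: l => a /=.
  - by rewrite (homM hf') f'P f'iota ggE /= mulrA (QA2 h2 hq HArel) mul1r.
  - by rewrite (homM hf') f'P f'iota ggE /= mulrA (QA2 h2 hq HArel) mul1r.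
  - by rewrite f'iota ggE.
  - by rewrite f'iota ggE.
have fgg : forall j x, f (gg j x) = iota j x.
  move=> j; apply: (cl_unique HC (comp_hom (hgg j) hf) (Hhom j)) => l /=.
  rewrite ggE; case: l => x /=; rewrite (ord1 x).
  - by rewrite (homM hf) fQ fg /= mulrA (PB2 h2 hq HCrel Hhom Hcomm) mul1r.
  - by rewrite (homM hf) fQ fg /= mulrA (PB2 h2 hq HCrel Hhom Hcomm) mul1r.
  - by rewrite fg.
  - by rewrite fg.
have [h0 [_ _ U]] := Huniv B iota Hhom Hcomm.
have f'f : forall y, f (f' y) = y.
  move=> y.
  have e1 := U (f \o f') (comp_hom hf' hf) (fun j x => etrans (f_equal f (f'iota j x)) (fgg j x)) y.
  have e2 := U id (id_hom B) (fun _ _ => erefl) y.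
  by rewrite /= in e1 e2; rewrite e1 -e2.
have PBh : forall a, hcomp (tens_gen gC iota) (@tens_deg n) 0 (PB gC iota a).
  move=> a; apply: hc_prod => j _; rewrite /Kp (homB (Hhom j)) !(homM (Hhom j)).
  apply: (@hcK _ _ _ _ (tens_gen gC iota) (@tens_deg n) (j, Psi ord0) (j, PsiS ord0)).
  by rewrite td_psi td_psis addrN.
have QAh : forall a, hcomp g (@cl_deg n) 0 (QA g a).
  move=> a; apply: hc_prod => j _; apply: (@hcK _ _ _ _ g (@cl_deg n) (Psi j) (PsiS j)).
  by rewrite /= addrN.
exists f; split => //; first by exists f'.
move=> d x; split.
- apply: (hc_hom hf) => l; rewrite fg; case: l => a /=.
  + apply: (hc_eq _ (hcM (PBh a) (hc_gen (tens_gen gC iota) (@tens_deg n) (a, Psi ord0)))).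
    by rewrite add0r td_psi.
  + apply: (hc_eq _ (hcM (PBh a) (hc_gen (tens_gen gC iota) (@tens_deg n) (a, PsiS ord0)))).
    by rewrite add0r td_psis.
  + by apply: (hc_eq _ (hc_gen (tens_gen gC iota) (@tens_deg n) (a, Om ord0))); rewrite td_om.
  + by apply: (hc_eq _ (hc_gen (tens_gen gC iota) (@tens_deg n) (a, OmI ord0))); rewrite td_omi.
- move=> H; rewrite -[x]ff'; apply: (hc_hom hf') H => -[j l].
  rewrite /tens_gen /= f'iota ggE; case: l => y /=.
  + apply: (hc_eq _ (hcM (QAh j) (hc_gen g (@cl_deg n) (Psi j)))).
    by rewrite add0r td_psi.
  + apply: (hc_eq _ (hcM (QAh j) (hc_gen g (@cl_deg n) (PsiS j)))).
    by rewrite add0r td_psis.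
  + by apply: (hc_eq _ (hc_gen g (@cl_deg n) (Om j))); rewrite td_om.
  + by apply: (hc_eq _ (hc_gen g (@cl_deg n) (OmI j))); rewrite td_omi.
Qed.
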